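(* Let $p\in\mathbb Q\cap(2,\infty)$, write $1/p=a/b$ with $a,b\in\mathbb N$ coprime, and let $k=\lceil\log_2(b+1)\rceil$. Then $\{(u,v,t)\in\mathbb R^3_+:v^{p/(p-2)}\le tu^{2/(p-2)}\}$ equals the set of $(u,v,t)\in\mathbb R^3$ for which there exist $\boldsymbol z^i\in\mathbb R^{2^i}$, $i=1,\dots,k-1$, with $$\begin{cases}\|(v,\tfrac12(z^1_1-z^1_2))\|_2\le\tfrac12(z^1_1+z^1_2)\\ \|(z^i_j,\tfrac12(z^{i+1}_{2j-1}-z^{i+1}_{2j}))\|_2\le\tfrac12(z^{i+1}_{2j-1}+z^{i+1}_{2j}) & i=1,\dots,k-2,\ j=1,\dots,2^i\\ z^{k-1}_j\le u & j=1,\dots,a\\ z^{k-1}_j\le t & j=a+1,\dots,\lfloor b/2\rfloor\\ \|(z^{k-1}_j,\tfrac12(t-v))\|_2\le\tfrac12(t+v) & j=\lfloor b/2\rfloor+1,\dots,\lceil b/2\rceil\\ z^{k-1}_j\le v & j=\lceil b/2\rceil+1,\dots,2^{k-1}\\ \boldsymbol z^i\ge\boldsymbol0 & i=1,\dots,k-1\\ u\ge0,\ v\ge0,\ t\ge0.\end{cases}$$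
   Context: $\|\cdot\|_2$ is the Euclidean norm of the indicated 2-vector; $\mathbb R^3_+$ is the nonnegative orthant. *)

(* Defs.v *)
From HB Require Import structures.
From mathcomp Require Import all_boot all_order all_algebra.
From mathcomp Require Import all_classical all_reals all_analysis.
Set Implicit Arguments.
Unset Strict Implicit.
Unset Printing Implicit Defensive.
Import Order.TTheory GRing.Theory Num.Theory.
Local Open Scope ring_scope.

Definition norm2 {R : realType} (x y : R) : R := Num.sqrt (x ^+ 2 + y ^+ 2).

(* Main.v *)
Require Import Defs.
From HB Require Import structures.
From mathcomp Require Import all_boot all_order all_algebra.
From mathcomp Require Import all_classical all_reals all_analysis.
From mathcomp Require Import zify ring lra.
Import Order.TTheory GRing.Theory Num.Theory.
Local Open Scope ring_scope.

Lemma cone_iff (R : realType) (x y w : R) : 0 <= y -> 0 <= w ->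
  (norm2 x ((y - w) / 2) <= (y + w) / 2) <-> x ^+ 2 <= y * w.
Proof.
move=> y0 w0; rewrite /norm2.
have c0 : 0 <= (y + w) / 2 by apply: divr_ge0 => //; lra.
rewrite -[X in _ <= X](ger0_norm c0) -sqrtr_sqr ler_sqrt ?sqr_ge0 //.
have -> : ((y + w) / 2) ^+ 2 = y * w + ((y - w) / 2) ^+ 2 by field.
by rewrite lerD2r.
Qed.

Lemma regroup (R : comPzSemiRingType) (F : nat -> R) m :
  \prod_(j < 2 * m) F j.+1 = \prod_(j < m) (F (2 * j).+1 * F (2 * j).+2).
Proof.
elim: m => [|m IH]; first by rewrite muln0 !big_ord0.
have -> : (2 * m.+1 = (2 * m).+2)%N by lia.
rewrite !big_ord_recr /= IH mulrA.
by have -> : ((2 * m).+1 = (2 * m) + 1)%N by lia.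
Qed.

Definition Bf {R : realType} (a b : nat) (u v t : R) (j : nat) : R :=
  if (j <= a)%N then u else if (j <= b./2)%N then t
  else if (j <= uphalf b)%N then Num.sqrt (t * v) else v.

Lemma Bprod (R : realType) (a b N : nat) (u v t : R) :
  0 <= v -> 0 <= t -> (2 * a < b)%N -> (b <= 2 * N)%N ->
  (\prod_(j < N) Bf a b u v t j.+1) ^+ 2
   = u ^+ (2 * a) * t ^+ (b - 2 * a) * v ^+ (2 * N - b).
Proof.
move=> v0 t0 hab hbN.
have hb : b = (odd b + (b./2).*2)%N by rewrite odd_double_half.
have hu : uphalf b = (odd b + b./2)%N by rewrite uphalf_half.
have ho : (odd b <= 1)%N by case: (odd b).
set fb := b./2 in hb hu *; set o := odd b in hb hu ho *.
have h1 : (a <= fb)%N by lia.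
have h2 : (fb <= uphalf b)%N by lia.
have h3 : (uphalf b <= N)%N by lia.
rewrite -(big_mkord xpredT (fun j => Bf a b u v t j.+1)).
rewrite (big_cat_nat (leq0n a) (leq_trans h1 (leq_trans h2 h3))).
rewrite (big_cat_nat h1 (leq_trans h2 h3)) (big_cat_nat h2 h3) /=.
rewrite (@eq_big_nat _ _ _ 0 a _ (fun=> u)); last first.
  by move=> i /andP[_ hi]; rewrite /Bf ifT.
rewrite (@eq_big_nat _ _ _ a fb _ (fun=> t)); last first.
  move=> i /andP[hi hi']; rewrite /Bf -/fb.
  have -> : (i < a)%N = false by lia.
  by have -> : (i < fb)%N = true by lia.
rewrite (@eq_big_nat _ _ _ fb (uphalf b) _ (fun=> Num.sqrt (t * v))); last first.
  move=> i /andP[hi hi']; rewrite /Bf -/fb.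
  have -> : (i < a)%N = false by lia.
  have -> : (i < fb)%N = false by lia.
  by have -> : (i < uphalf b)%N = true by lia.
rewrite (@eq_big_nat _ _ _ (uphalf b) N _ (fun=> v)); last first.
  move=> i /andP[hi hi']; rewrite /Bf -/fb.
  have -> : (i < a)%N = false by lia.
  have -> : (i < fb)%N = false by lia.
  by have -> : (i < uphalf b)%N = false by lia.
rewrite !prodr_const_nat.
have -> : (uphalf b - fb = o)%N by lia.
rewrite !exprMn -!exprM.
rewrite (mulnC o 2) (exprM (Num.sqrt (t * v))) sqr_sqrtr ?mulr_ge0 // exprMn.
have -> : (b - 2 * a = (fb - a) * 2 + o)%N by lia.
have -> : (2 * N - b = o + (N - uphalf b) * 2)%N by lia.
rewrite subn0 (mulnC a 2%N) (exprD t) (exprD v).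
ring.
Qed.

Definition Pl {R : realType} (z : nat -> nat -> R) (i : nat) : R :=
  \prod_(j < 2 ^ i) z i j.+1.

Lemma Pl1 (R : realType) (z : nat -> nat -> R) : Pl z 1 = z 1%N 1%N * z 1%N 2%N.
Proof. by rewrite /Pl expn1 !big_ord_recr big_ord0 /= mul1r. Qed.

Lemma Pl_step (R : realType) (z : nat -> nat -> R) i :
  \prod_(j < 2 ^ i) (z i.+1 (2 * j.+1 - 1)%N * z i.+1 (2 * j.+1)%N) = Pl z i.+1.
Proof.
rewrite /Pl expnS regroup; apply: eq_bigr => j _.
rewrite (_ : (2 * j.+1 - 1 = (2 * j).+1)%N); last lia.
by rewrite (_ : (2 * j.+1 = (2 * j).+2)%N) //; lia.
Qed.

Lemma chain_le (R : realType) (z : nat -> nat -> R) (v : R) n :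
  0 <= v ->
  v ^+ 2 <= z 1%N 1%N * z 1%N 2%N ->
  (forall i j, (1 <= i <= n - 1)%N -> (1 <= j <= 2 ^ i)%N ->
     z i j ^+ 2 <= z i.+1 (2 * j - 1)%N * z i.+1 (2 * j)%N) ->
  (forall i j, (1 <= i <= n)%N -> (1 <= j <= 2 ^ i)%N -> 0 <= z i j) ->
  forall i, (1 <= i <= n)%N -> v ^+ (2 ^ i) <= Pl z i.
Proof.
move=> v0 top lev nn; elim=> [//|m IH] /andP[h1 h2].
case: m IH h1 h2 => [|m] IH h1 h2; first by rewrite Pl1 expn1.
have {}IH := IH (ltac:(apply/andP; split; lia)).
rewrite -Pl_step expnS mulnC exprM.
apply: (le_trans (y := \prod_(j < 2 ^ m.+1) z m.+1 j.+1 ^+ 2)).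
  rewrite prodrXl (ler_pXn2r (n:=2)) // nnegrE ?exprn_ge0 //.
  by apply: prodr_ge0 => j _; apply: nn; apply/andP; split; try lia; have := ltn_ord j; lia.
apply: ler_prod => j _; rewrite sqr_ge0 /=.
by apply: lev; apply/andP; split; try lia; have := ltn_ord j; lia.
Qed.

Fixpoint gt {R : realType} (B : nat -> R) (d j : nat) : R :=
  match d with
  | 0 => B j
  | d'.+1 => Num.sqrt (gt B d' (2 * j - 1)%N * gt B d' (2 * j)%N)
  end.

Lemma gt_ge0 (R : realType) (B : nat -> R) d j : (forall j, 0 <= B j) -> 0 <= gt B d j.
Proof. by move=> hB; case: d => [|d] /=; [apply: hB | apply: sqrtr_ge0]. Qed.

Lemma chain_eq (R : realType) (B : nat -> R) n : (forall j, 0 <= B j) ->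
  forall m i, (1 <= i)%N -> (i + m = n)%N ->
   Pl (fun i j => gt B (n - i) j) i ^+ (2 ^ m) = Pl (fun i j => gt B (n - i) j) n.
Proof.
move=> hB; elim=> [|m IH] i hi him; first by rewrite expn0 expr1 -him addn0.
rewrite expnS exprM -(IH i.+1) //; last by lia.
congr (_ ^+ _); rewrite -Pl_step /Pl -prodrXl; apply: eq_bigr => j _.
have -> : (n - i = (n - i.+1).+1)%N by lia.
by rewrite /= sqr_sqrtr // mulr_ge0 // gt_ge0.
Qed.

Lemma pow_equiv (R : realType) (a b : nat) (u v t : R) :
  (2 * a < b)%N -> 0 <= u -> 0 <= v -> 0 <= t ->
  (v `^ (b%:R / (b - 2 * a)%:R) <= t * u `^ ((2 * a)%:R / (b - 2 * a)%:R))
  <-> v ^+ b <= u ^+ (2 * a) * t ^+ (b - 2 * a).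
Proof.
move=> hab u0 v0 t0.
set e : R := (b - 2 * a)%:R.
have e0 : 0 < e by rewrite /e ltr0n; lia.
have ex : (v `^ (b%:R / e)) `^ e = v ^+ b.
  by rewrite -powRrM divfK ?gt_eqF // powR_mulrn.
have ey : (t * u `^ ((2 * a)%:R / e)) `^ e = u ^+ (2 * a) * t ^+ (b - 2 * a).
  rewrite powRM ?powR_ge0 // -powRrM divfK ?gt_eqF // powR_mulrn //.
  by rewrite /e powR_mulrn // mulrC.
have y0 : 0 <= t * u `^ ((2 * a)%:R / e) by rewrite mulr_ge0 ?powR_ge0.
split => H.
  rewrite -ex -ey; apply: (ge0_ler_powR (ltW e0)) => //; rewrite nnegrE ?powR_ge0 //.
have ie : e * e^-1 = 1 by rewrite divff ?gt_eqF.
have hx : forall x : R, 0 <= x -> x = (x `^ e) `^ e^-1.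
  by move=> x x0; rewrite -powRrM ie powRr1.
rewrite (hx _ (powR_ge0 v _)) (hx _ y0) ex ey.
apply: ge0_ler_powR => //; rewrite ?invr_ge0 ?ltW // nnegrE.
  by rewrite exprn_ge0.
by rewrite mulr_ge0 ?exprn_ge0.
Qed.

Lemma cone_le (R : realType) (x y w : R) : 0 <= y -> 0 <= w ->
  norm2 x ((y - w) / 2) <= (y + w) / 2 -> x ^+ 2 <= y * w.
Proof. by move=> y0 w0; case: (@cone_iff R x y w y0 w0). Qed.

Theorem proposition3p6 (R : realType) (p : rat) (a b : nat) :
  2 < p ->
  coprime a b -> (0 < b)%N ->
  p^-1 = (a%:R / b%:R : rat) ->
  let k := up_log 2 b.+1 in
  let pR : R := ratr p in
  forall u v t : R,
    (0 <= u /\ 0 <= v /\ 0 <= t /\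
     v `^ (pR / (pR - 2)) <= t * u `^ (2 / (pR - 2)))
    <->
    (exists z : nat -> nat -> R,
      (* z i j is the j-th coordinate (1-based) of z^i, i = 1..k-1, j = 1..2^i *)
      norm2 v ((z 1%N 1%N - z 1%N 2%N) / 2) <= (z 1%N 1%N + z 1%N 2%N) / 2 /\
      (forall i j : nat, (1 <= i <= k - 2)%N -> (1 <= j <= 2 ^ i)%N ->
         norm2 (z i j) ((z i.+1 (2 * j - 1)%N - z i.+1 (2 * j)%N) / 2)
           <= (z i.+1 (2 * j - 1)%N + z i.+1 (2 * j)%N) / 2) /\
      (forall j : nat, (1 <= j <= a)%N -> z (k - 1)%N j <= u) /\
      (forall j : nat, (a + 1 <= j <= b./2)%N -> z (k - 1)%N j <= t) /\
      (forall j : nat, (b./2 + 1 <= j <= uphalf b)%N ->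
         norm2 (z (k - 1)%N j) ((t - v) / 2) <= (t + v) / 2) /\
      (forall j : nat, (uphalf b + 1 <= j <= 2 ^ (k - 1))%N -> z (k - 1)%N j <= v) /\
      (forall i j : nat, (1 <= i <= k - 1)%N -> (1 <= j <= 2 ^ i)%N -> 0 <= z i j) /\
      0 <= u /\ 0 <= v /\ 0 <= t).
Proof.
move=> hp hcop hb0 hinv k pR u v t.
have ha0 : (0 < a)%N.
  case: a hinv {hcop} => [|a'] // hinv.
  move: hinv; rewrite mul0r => /eqP; rewrite invr_eq0 => /eqP p0.
  by move: hp; rewrite p0; lra.
have pQ : p = b%:R / a%:R :> rat by rewrite -[p]invrK hinv invf_div.
have hab : (2 * a < b)%N.
  by move: hp; rewrite pQ ltr_pdivlMr ?ltr0n // -natrM ltr_nat.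
have pRe : pR = b%:R / a%:R.
  by rewrite /pR pQ fmorph_div; congr (_ / _); apply: ratr_nat.
have a0 : (a%:R : R) != 0 by rewrite pnatr_eq0 -lt0n.
have d0 : (b%:R - 2 * a%:R : R) != 0.
  by rewrite -natrM -natrB ?pnatr_eq0 -?lt0n; lia.
have e1 : pR / (pR - 2) = b%:R / (b - 2 * a)%:R :> R.
  by rewrite pRe natrB ?natrM; [field; apply/andP; split | lia].
have e2 : 2 / (pR - 2) = (2 * a)%:R / (b - 2 * a)%:R :> R.
  by rewrite pRe natrB ?natrM; [field; apply/andP; split | lia].
have hk1 : (b.+1 <= 2 ^ k)%N by apply: up_logP.
have hk2 : (2 <= k)%N.
  rewrite leqNgt; apply/negP => hk.
  have : (2 ^ k <= 2 ^ 1)%N by rewrite leq_exp2l //; lia.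
  lia.
set n := (k - 1)%N.
have hN : (2 ^ k = 2 * 2 ^ n)%N by rewrite /n subn1 -expnS prednK //; lia.
have hbN : (b <= 2 * 2 ^ n)%N by lia.
have hn1 : (1 <= n)%N by lia.
have hk2' : (k - 2 = n - 1)%N by lia.
rewrite e1 e2 hk2'.
clear e1 e2 pRe pQ hinv hp a0 d0 hcop.
have hNb : (2 * 2 ^ n = b + (2 * 2 ^ n - b))%N by lia.
set B := Bf a b u v t.
have PB : forall (w : R), 0 <= v -> 0 <= t -> (\prod_(j < 2 ^ n) B j.+1) ^+ 2 = u ^+ (2 * a) * t ^+ (b - 2 * a) * v ^+ (2 * 2 ^ n - b).
  by move=> w v0 t0; apply: Bprod.
split.
- case=> [u0 [v0 [t0 H]]]; have {}H := (@pow_equiv R a b u v t hab u0 v0 t0).1 H.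
  have B0 : forall j, 0 <= B j.
    move=> j; rewrite /B /Bf; case: ifP => _ //; case: ifP => _ //.
    by case: ifP => _ //; apply: sqrtr_ge0.
  have gB : forall j, gt B (n - n) j = B j by move=> j; rewrite subnn.
  exists (fun i j => gt B (n - i) j).
  split.
    apply/cone_iff; rewrite ?gt_ge0 //.
    rewrite -(@Pl1 R (fun i j => gt B (n - i) j)).
    have hc := @chain_eq R B n B0 (n - 1)%N 1%N isT ltac:(lia).
    have hPn : Pl (fun i j => gt B (n - i) j) n = \prod_(j < 2 ^ n) B j.+1.
      by rewrite /Pl; apply: eq_bigr => j _; rewrite gB.
    have hvN : v ^+ (2 ^ n) <= \prod_(j < 2 ^ n) B j.+1.
      rewrite -(ler_pXn2r (n := 2)) // ?nnegrE ?exprn_ge0 ?prodr_ge0 //.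
      rewrite PB // -exprM mulnC {1}hNb exprD.
      by apply: ler_wpM2r; rewrite ?exprn_ge0.
    rewrite -(ler_pXn2r (n := (2 ^ (n - 1))%N)) ?expn_gt0 // ?nnegrE ?exprn_ge0 //; last first.
      by apply: prodr_ge0 => j _; apply: gt_ge0.
    by rewrite hc hPn -exprM -expnS subn1 prednK.
  split.
    move=> i j hi hj; apply/cone_iff; rewrite ?gt_ge0 //.
    have -> : (n - i = (n - i.+1).+1)%N by lia.
    by rewrite /= sqr_sqrtr ?mulr_ge0 ?gt_ge0.
  split.
    move=> j hj /=; rewrite gB /B /Bf.
    by have -> : (j <= a)%N = true by lia.
  split.
    move=> j hj /=; rewrite gB /B /Bf.
    have -> : (j <= a)%N = false by lia.
    by have -> : (j <= b./2)%N = true by lia.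
  split.
    move=> j hj /=; rewrite gB /B /Bf.
    have -> : (j <= a)%N = false by lia.
    have -> : (j <= b./2)%N = false by lia.
    have -> : (j <= uphalf b)%N = true by lia.
    apply/cone_iff => //.
    by rewrite sqr_sqrtr ?mulr_ge0.
  split.
    move=> j hj /=; rewrite gB /B /Bf.
    have -> : (j <= a)%N = false by lia.
    have -> : (j <= b./2)%N = false by lia.
    by have -> : (j <= uphalf b)%N = false by lia.
  split.
    by move=> i j _ _; apply: gt_ge0.
  by [].
- case=> z [c1 [c2 [c3 [c4 [c5 [c6 [c7 [u0 [v0 t0]]]]]]]]].
  do 3! split => //.
  apply/(@pow_equiv R a b u v t hab u0 v0 t0).
  have top : v ^+ 2 <= z 1%N 1%N * z 1%N 2%N.
    by apply: cone_le c1; apply: c7.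
  have lev : forall i j, (1 <= i <= n - 1)%N -> (1 <= j <= 2 ^ i)%N ->
     z i j ^+ 2 <= z i.+1 (2 * j - 1)%N * z i.+1 (2 * j)%N.
    move=> i j hi hj; apply: cone_le (c2 i j hi hj); apply: c7; rewrite ?expnS; lia.
  have hc := @chain_le R z v n v0 top lev c7 n (ltac:(lia)).
  have leaf : Pl z n <= \prod_(j < 2 ^ n) B j.+1.
    apply: ler_prod => j _; have hj := ltn_ord j.
    have hz : 0 <= z n j.+1 by apply: c7; lia.
    rewrite hz /=.
    rewrite /B /Bf.
    case: ifP => h1; first by apply: c3; lia.
    case: ifP => h2; first by apply: c4; lia.
    case: ifP => h3; last by apply: c6; lia.
    rewrite -(ger0_norm hz) -sqrtr_sqr ler_sqrt ?mulr_ge0 //.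
    by apply: cone_le (c5 j.+1 ltac:(lia)).
  have := le_trans hc leaf.
  rewrite -(ler_pXn2r (n := 2)) // ?nnegrE ?exprn_ge0 ?prodr_ge0 //; last first.
    by move=> j _; rewrite /B /Bf; repeat case: ifP => _ //; apply: sqrtr_ge0.
  rewrite PB // -exprM mulnC {1}hNb exprD.
  have [->|vpos] := eqVneq v 0.
    by rewrite expr0n gt_eqF ?mulr_ge0 ?exprn_ge0 //; lia.
  by rewrite ler_pM2r // exprn_gt0 // lt_def vpos v0.
Qed.
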